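(* Let $\mathbf{A}=(\mathcal{P},\mathcal{L},\parallel)$ and $\mathbf{A}'=(\mathcal{P}',\mathcal{L}',\parallel')$ be affine spaces with $\dim\mathbf{A}'\ge 3$. Suppose that $\varphi:\mathcal{L}\to\mathcal{L}'$ is a bijection satisfying $$a\sim b\implies a^\varphi\sim' b^\varphi\quad\text{for all }a,b\in\mathcal{L}.$$ Then $$\lambda:\mathcal{P}\to\mathcal{P}',\qquad a\cap b\mapsto a^\varphi\cap b^\varphi\quad(a,b\in\mathcal{L},\ a\approx b)$$ is a well-defined injection that maps collinear triples of points to collinear triples and non-collinear triples to non-collinear triples. Moreover, $\mathcal{L}(Q)^\varphi=\mathcal{L}'(Q^\lambda)$ for all $Q\in\mathcal{P}$.
   Context: An affine space $\mathbf{A}=(\mathcal{P},\mathcal{L},\parallel)$ has point set $\mathcal{P}$, line set $\mathcal{L}$ (lines viewed as subsets of $\mathcal{P}$) and parallelism $\parallel$. Two lines $a,b$ are related, $a\sim b$, if $a\cap b\neq\emptyset$; adjacent, $a\approx b$, if $a\sim b$ and $a\ne b$; analogously $\sim'$ in $\mathbf{A}'$. For a point $Q\in\mathcal{P}$, $\mathcal{L}(Q)$ denotes the star of lines with centre $Q$, i.e. the set of all lines of $\mathbf{A}$ through $Q$; similarly $\mathcal{L}'(Q')$ in $\mathbf{A}'$. Images are written $x^\varphi$, and $\mathcal{L}(Q)^\varphi=\{x^\varphi: x\in\mathcal{L}(Q)\}$. *)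

(* Defs.v *)
(* abstract (synthetic) affine spaces in the sense of
   Lenz / Buekenhout: points, lines (with an incidence relation), and a
   parallelism on lines. *)
Set Implicit Arguments.


Record AffineSpace := {
  point : Type;
  line : Type;
  inc : point -> line -> Prop;
  par : line -> line -> Prop;
  ax_join : forall p q, p <> q -> exists l, inc p l /\ inc q l;
  ax_join_uniq : forall p q l m, p <> q -> inc p l -> inc q l ->
                  inc p m -> inc q m -> l = m;
  ax_line2 : forall l, exists p q, p <> q /\ inc p l /\ inc q l;
  ax_par_refl : forall l, par l l;
  ax_par_sym : forall l m, par l m -> par m l;
  ax_par_trans : forall l m n, par l m -> par m n -> par l n;
  ax_euclid : forall p l, exists m, inc p m /\ par m l;
  ax_euclid_uniq : forall p l m1 m2, inc p m1 -> par m1 l ->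
                     inc p m2 -> par m2 l -> m1 = m2;
  ax_triangle : forall a b c a' b' lab lac lbc la'b' m1 m2,
      (~ exists l, inc a l /\ inc b l /\ inc c l) ->
      inc a lab -> inc b lab -> inc a lac -> inc c lac ->
      inc b lbc -> inc c lbc -> a' <> b' -> inc a' la'b' -> inc b' la'b' ->
      par lab la'b' ->
      inc a' m1 -> par m1 lac -> inc b' m2 -> par m2 lbc ->
      exists c', inc c' m1 /\ inc c' m2;
  ax_rank : exists a b c, ~ exists l, inc a l /\ inc b l /\ inc c l
}.

Arguments inc {a} _ _ : rename.
Arguments par {a} _ _ : rename.

Section Notions.
Variable A : AffineSpace.

Definition related (a b : line A) : Prop := exists p, inc p a /\ inc p b.
Definition adjacent (a b : line A) : Prop := related a b /\ a <> b.

Definition collinear (p q r : point A) : Prop :=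
  exists l, inc p l /\ inc q l /\ inc r l.

Definition subspace (S : point A -> Prop) : Prop :=
  (forall p q l, S p -> S q -> p <> q -> inc p l -> inc q l ->
     forall x, inc x l -> S x) /\
  (forall p l m, S p -> (forall x, inc x l -> S x) -> inc p m -> par m l ->
     forall x, inc x m -> S x).

Definition span3 (p q r : point A) (x : point A) : Prop :=
  forall S, subspace S -> S p -> S q -> S r -> S x.

(* dim A >= 3 : no subspace spanned by three points (i.e. no plane,
   line or point) is the whole point set *)
Definition dim_ge3 : Prop :=
  forall p q r, exists x, ~ span3 p q r x.

End Notions.

Arguments related {A} _ _.
Arguments adjacent {A} _ _.
Arguments collinear {A} _ _ _.
Arguments subspace {A} _.
Arguments span3 {A} _ _ _ _.

(* Main.v *)
Require Import Defs.
From Stdlib Require Import Classical ClassicalEpsilon.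

Lemma meet_uniq (A : AffineSpace) (a b : line A) (X Y : point A) :
  a <> b -> inc X a -> inc X b -> inc Y a -> inc Y b -> X = Y.
Proof.
  intros Hab HXa HXb HYa HYb. destruct (classic (X = Y)) as [|n]; auto.
  exfalso. apply Hab. exact (@ax_join_uniq A X Y a b n HXa HYa HXb HYb).
Qed.

Lemma point_off_line (A : AffineSpace) (l : line A) : exists R, ~ inc R l.
Proof.
  destruct (ax_rank A) as [a [b [c H]]].
  destruct (classic (inc a l)); [| eauto].
  destruct (classic (inc b l)); [| eauto].
  destruct (classic (inc c l)); [| eauto].
  exfalso; apply H; eauto.
Qed.

Lemma two_lines (A : AffineSpace) (Q : point A) (l0 : line A) :
  exists a b, a <> b /\ inc Q a /\ inc Q b.
Proof.
  destruct (ax_euclid A Q l0) as [a [Ha _]].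
  destruct (point_off_line A a) as [R HR].
  assert (H : Q <> R) by (intro; subst; tauto).
  destruct (@ax_join A Q R H) as [b [H1 H2]].
  exists a, b. split; [intro; subst; tauto | auto].
Qed.

Lemma not_span (A : AffineSpace) (p q r x : point A) :
  ~ span3 p q r x -> exists S, subspace S /\ S p /\ S q /\ S r /\ ~ S x.
Proof.
  intro H. apply NNPP; intro H2. apply H. intros S H1 H3 H4 H5.
  apply NNPP; intro H6. apply H2. exists S; auto 6.
Qed.

Lemma line_avoid (A' : AffineSpace) (hdim : dim_ge3 A') (X : point A') :
  exists l, ~ inc X l.
Proof.
  destruct (hdim X X X) as [x Hx].
  assert (H : X <> x).
  { intro; subst. apply Hx. intros S _ H _ _. exact H. }
  destruct (@ax_join _ X x H) as [l [HX Hxl]].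
  destruct (hdim X x x) as [y Hy].
  destruct (not_span _ _ _ _ _ Hy) as [S [[Hj Hp] [SX [Sx [_ Sy]]]]].
  destruct (ax_euclid _ y l) as [k [Hyk Hkl]].
  exists k. intro HXk. apply Sy.
  apply (Hp X l k SX); auto.
  intros z Hz. exact (Hj X x l SX Sx H HX Hxl z Hz).
Qed.

Lemma step1 (A A' : AffineSpace) (phi : line A -> line A')
  (phi_inj : forall a b, phi a = phi b -> a = b)
  (phi_surj : forall a', exists a, phi a = a')
  (hdim : dim_ge3 A')
  (hrel : forall a b, related a b -> related (phi a) (phi b))
  (Q : point A) (l0 : line A) :
  exists X, forall c, inc Q c -> inc X (phi c).
Proof.
  destruct (two_lines A Q l0) as [a [b [Hab [Ha Hb]]]].
  assert (Hr: related (phi a) (phi b)) by (apply hrel; exists Q; auto).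
  destruct Hr as [X [HXa HXb]].
  assert (Hab' : phi a <> phi b) by (intro E; apply Hab, phi_inj, E).
  exists X. intros c Hc. apply NNPP. intro HXc.
  destruct (hrel c a) as [Y [HYc HYa]]; [exists Q; auto|].
  destruct (hrel c b) as [Z [HZc HZb]]; [exists Q; auto|].
  assert (XY : X <> Y) by (intro; subst; auto).
  assert (XZ : X <> Z) by (intro; subst; auto).
  assert (YZ : Y <> Z).
  { intro; subst Z. apply XY. exact (meet_uniq _ _ _ X Y Hab' HXa HXb HYa HZb). }
  destruct (hdim X Y Z) as [x Hx].
  destruct (not_span _ _ _ _ _ Hx) as [S [[Hj Hp] [SX [SY [SZ Sx]]]]].
  assert (Sa : forall p, inc p (phi a) -> S p)
    by (intros p Hp0; exact (Hj X Y (phi a) SX SY XY HXa HYa p Hp0)).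
  assert (Sb : forall p, inc p (phi b) -> S p)
    by (intros p Hp0; exact (Hj X Z (phi b) SX SZ XZ HXb HZb p Hp0)).
  assert (Sc : forall p, inc p (phi c) -> S p)
    by (intros p Hp0; exact (Hj Y Z (phi c) SY SZ YZ HYc HZc p Hp0)).
  destruct (ax_euclid _ x (phi a)) as [k' [Hxk Hk]].
  assert (Hk' : forall p, inc p k' -> ~ S p).
  { intros p Hpk Sp. apply Sx. exact (Hp p (phi a) k' Sp Sa Hpk Hk x Hxk). }
  destruct (phi_surj k') as [k Ek]. subst k'.
  destruct (classic (inc Q k)) as [HQk|HQk].
  - destruct (hrel k a) as [p [Hp1 Hp2]]; [exists Q; auto|].
    exact (Hk' p Hp1 (Sa p Hp2)).
  - destruct (ax_line2 _ k) as [P [_ [_ [HPk _]]]].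
    assert (QP: Q <> P) by (intro; subst; auto).
    destruct (@ax_join _ Q P QP) as [m [HQm HPm]].
    destruct (hrel m a) as [p1 [H1m H1a]]; [exists Q; auto|].
    destruct (hrel m b) as [p2 [H2m H2b]]; [exists Q; auto|].
    destruct (hrel m c) as [p3 [H3m H3c]]; [exists Q; auto|].
    destruct (hrel m k) as [r [Hrm Hrk]]; [exists P; auto|].
    assert (Sm : forall z, inc z (phi m) -> S z).
    { destruct (classic (p1 = p2)) as [E12|N12].
      - subst p2. assert (p1 = X) by exact (meet_uniq _ _ _ p1 X Hab' H1a H2b HXa HXb).
        subst p1.
        destruct (classic (X = p3)) as [E|N].
        + subst p3; contradiction.
        + intros z Hz. exact (Hj X p3 (phi m) SX (Sc p3 H3c) N H1m H3m z Hz).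
      - intros z Hz. exact (Hj p1 p2 (phi m) (Sa p1 H1a) (Sb p2 H2b) N12 H1m H2m z Hz). }
    exact (Hk' r Hrk (Sm r Hrm)).
Qed.

Lemma collapse (A A' : AffineSpace) (phi : line A -> line A')
  (phi_inj : forall a b, phi a = phi b -> a = b)
  (lam : point A -> point A')
  (Hlam : forall Q c, inc Q c -> inc (lam Q) (phi c))
  (P Q : point A) (n : line A) :
  P <> Q -> lam P = lam Q -> inc P n -> inc Q n ->
  forall R, ~ inc R n -> lam R = lam P.
Proof.
  intros N E HPn HQn R HR.
  assert (RP: R <> P) by (intro; subst; auto).
  assert (RQ: R <> Q) by (intro; subst; auto).
  destruct (@ax_join _ R P RP) as [m1 [H1 H2]].
  destruct (@ax_join _ R Q RQ) as [m2 [H3 H4]].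
  assert (Hm : m1 <> m2).
  { intro; subst m2. apply HR.
    assert (m1 = n) by exact (@ax_join_uniq _ P Q m1 n N H2 H4 HPn HQn).
    subst; auto. }
  apply (meet_uniq _ (phi m1) (phi m2)).
  - intro E'; apply Hm, phi_inj, E'.
  - apply Hlam; auto.
  - apply Hlam; auto.
  - apply Hlam; auto.
  - rewrite E; apply Hlam; auto.
Qed.

Theorem theorem2 (A A' : AffineSpace) (phi : line A -> line A')
  (phi_inj : forall a b, phi a = phi b -> a = b)
  (phi_surj : forall a', exists a, phi a = a')
  (hdim : dim_ge3 A')
  (hrel : forall a b, related a b -> related (phi a) (phi b)) :
  exists lambda : point A -> point A',
    (forall a b Q, adjacent a b -> inc Q a -> inc Q b ->
        inc (lambda Q) (phi a) /\ inc (lambda Q) (phi b)) /\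
    (forall P Q, lambda P = lambda Q -> P = Q) /\
    (forall P Q R, collinear P Q R ->
        collinear (lambda P) (lambda Q) (lambda R)) /\
    (forall P Q R, ~ collinear P Q R ->
        ~ collinear (lambda P) (lambda Q) (lambda R)) /\
    (forall Q (l' : line A'),
        inc (lambda Q) l' <-> exists l, inc Q l /\ phi l = l').
Proof.
  destruct (ax_rank A') as [X0 _].
  destruct (line_avoid A' hdim X0) as [l0' _].
  destruct (phi_surj l0') as [l0 _].
  pose (H1 := fun Q => step1 A A' phi phi_inj phi_surj hdim hrel Q l0).
  pose (lam := fun Q => proj1_sig (constructive_indefinite_description _ (H1 Q))).
  assert (Hlam : forall Q c, inc Q c -> inc (lam Q) (phi c)).
  { intros Q c Hc. unfold lam.
    destruct (constructive_indefinite_description _ (H1 Q)) as [X HX]; simpl; auto. }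
  assert (Hinj : forall P Q, lam P = lam Q -> P = Q).
  { intros P Q E. apply NNPP; intro N.
    destruct (@ax_join _ P Q N) as [n [HPn HQn]].
    assert (All : forall R, lam R = lam P).
    { intro R. destruct (classic (inc R n)) as [HR|HR];
        [| exact (collapse A A' phi phi_inj lam Hlam P Q n N E HPn HQn R HR)].
      destruct (point_off_line A n) as [T HT].
      assert (ET : lam T = lam P)
        by exact (collapse A A' phi phi_inj lam Hlam P Q n N E HPn HQn T HT).
      assert (PT : P <> T) by (intro; subst; auto).
      destruct (@ax_join _ P T PT) as [m [HPm HTm]].
      destruct (classic (R = P)) as [->|RP]; [reflexivity|].
      assert (HRm : ~ inc R m).
      { intro HRm. apply HT.
        assert (m = n) by exact (@ax_join_uniq _ P R m n (fun e => RP (eq_sym e)) HPm HRm HPn HR).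
        subst; auto. }
      exact (collapse A A' phi phi_inj lam Hlam P T m PT (eq_sym ET) HPm HTm R HRm). }
    destruct (line_avoid A' hdim (lam P)) as [l' Hl'].
    destruct (phi_surj l') as [l El].
    destruct (ax_line2 _ l) as [R [_ [_ [HR _]]]].
    apply Hl'. rewrite <- El, <- (All R). apply Hlam; auto. }
  assert (Hstar : forall Q (l' : line A'),
        inc (lam Q) l' <-> exists l, inc Q l /\ phi l = l').
  { intros Q l'. split.
    - intro H. destruct (phi_surj l') as [l El]. exists l. split; auto.
      apply NNPP; intro HQl.
      destruct (ax_line2 _ l) as [P [_ [_ [HPl _]]]].
      assert (QP: Q <> P) by (intro; subst; auto).
      destruct (@ax_join _ Q P QP) as [m [HQm HPm]].
      assert (NE : lam Q <> lam P) by (intro E; apply QP, Hinj, E).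
      assert (phi m = phi l).
      { apply (@ax_join_uniq _ (lam Q) (lam P) (phi m) (phi l) NE); [apply Hlam; auto|apply Hlam; auto|rewrite El; auto|apply Hlam; auto]. }

      apply HQl. rewrite <- (phi_inj _ _ H0). auto.
    - intros [l [Hl El]]. subst. apply Hlam; auto. }
  exists lam. split; [|split; [|split; [|split]]].
  - intros a b Q _ Ha Hb. split; apply Hlam; auto.
  - exact Hinj.
  - intros P Q R [l [HP [HQ HR]]]. exists (phi l). repeat split; apply Hlam; auto.
  - intros P Q R HN [l' [HP [HQ HR]]]. apply HN.
    apply Hstar in HP. apply Hstar in HQ. apply Hstar in HR.
    destruct HP as [l1 [H1P E1]]. destruct HQ as [l2 [H2Q E2]].
    destruct HR as [l3 [H3R E3]].
    exists l1. rewrite <- E1 in E2, E3.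
    rewrite (phi_inj _ _ E2) in H2Q. rewrite (phi_inj _ _ E3) in H3R. auto.
  - exact Hstar.
Qed.
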